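(* For every 2-coloring of the edges of $K_\mathbb{N}$ there exist a set $A\subseteq\mathbb{N}$, a vertex $v\in A$ and a color $c$ such that, letting $F$ be the graph on $A$ consisting of all edges of color $c$ inside $A$, every vertex of $F$ has infinite degree in $F$ and $\overline{d}(N_F(v))\ge 1/2$.
   Context: $K_{\mathbb{N}}$ is the complete graph on $\mathbb{N}=\{1,2,\dots\}$. $\overline{d}(V)=\limsup_{t\to\infty}|V\cap\{1,\dots,t\}|/t$. $N_F(v)$ is the set of neighbors of $v$ in $F$. *)

(* Defs.v *)
From HB Require Import structures.
From mathcomp Require Import all_boot all_order all_algebra.
From mathcomp Require Import all_classical all_reals all_analysis.
From mathcomp Require Import Rstruct.
Set Implicit Arguments. Unset Strict Implicit. Unset Printing Implicit Defensive.
Import Order.TTheory GRing.Theory Num.Theory.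

(* Vertex set of K_N is N = {1,2,...}, represented inside nat (0 is unused). *)
Definition two_coloring (col : nat -> nat -> bool) : Prop :=
  forall x y, col x y = col y x.

Definition count_upto (V : nat -> bool) (t : nat) : nat :=
  \sum_(1 <= i < t.+1) (V i : nat).

Definition upper_density (V : nat -> bool) : \bar Rdefinitions.R :=
  limn_esup (fun t : nat => (((count_upto V t)%:R / t%:R : Rdefinitions.R))%:E).

(* F = graph on A whose edges are the pairs inside A of colour c.
   N_F(v) = { u | u in A, u <> v, col v u = c } *)
Definition nbhd (col : nat -> nat -> bool) (A : nat -> bool) (c : bool) (v : nat)
  : nat -> bool :=
  fun u => [&& A u, u != v & col v u == c].

Definition infinite_degree (col : nat -> nat -> bool) (A : nat -> bool) (c : bool)
  (v : nat) : Prop :=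
  forall n : nat, exists u : nat, (n < u)%N /\ nbhd col A c v u.

(* Main.v *)
Require Import Defs.
From HB Require Import structures.
From mathcomp Require Import all_boot all_order all_algebra.
From mathcomp Require Import all_classical all_reals all_analysis.
From mathcomp Require Import Rstruct.
From mathcomp Require Import zify lra.
Import Order.TTheory GRing.Theory Num.Theory.
Local Open Scope classical_set_scope.

Notation RR := Rdefinitions.R.

Lemma count_S V t : count_upto V t.+1 = (count_upto V t + V t.+1)%N.
Proof. by rewrite /count_upto big_nat_recr. Qed.

Lemma count_0 V : count_upto V 0 = 0%N.
Proof. by rewrite /count_upto big_geq. Qed.

Lemma count_le (n : nat) (X Y Z : nat -> bool) t :
  (forall i, (n < i)%N -> Z i -> X i || Y i) ->
  (count_upto Z t <= minn n t + count_upto X t + count_upto Y t)%N.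
Proof.
move=> H; elim: t => [|t IH]; first by rewrite !count_0.
rewrite !count_S.
have : (Z t.+1 <= (t < n)%N + X t.+1 + Y t.+1)%N.
  case: (ltnP t n) => Htn; first by case: (Z _); case: (X _); case: (Y _).
  case HZ: (Z t.+1) => //; have := H t.+1 Htn HZ.
  by case: (X _); case: (Y _).
have : minn n t.+1 = (minn n t + (t < n)%N)%N.
  by case: (ltnP t n) => h; lia.
lia.
Qed.

Lemma count_le_t V t : (count_upto V t <= t)%N.
Proof.
elim: t => [|t IH]; first by rewrite count_0.
by rewrite count_S; case: (V _); lia.
Qed.

From Stdlib Require Import Classical.
Local Open Scope ereal_scope.

Lemma L3 (u : nat -> \bar RR) N r :
  (forall t, (N <= t)%N -> u t <= r%:E) -> limn_esup u <= r%:E.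
Proof.
move=> H; rewrite /limn_esup limf_esupE.
apply: ge_ereal_inf; exists (ereal_sup (u @` [set t | (N <= t)%N])).
  exists [set t | (N <= t)%N] => //. exact: nbhs_infty_ge.
apply: ge_ereal_sup => _ [t Ht <-]; exact: H.
Qed.
Lemma L2 (u : nat -> \bar RR) r :
  limn_esup u < r%:E -> exists N, forall t, (N <= t)%N -> u t < r%:E.
Proof.
rewrite /limn_esup limf_esupE => /ereal_inf_lt[_ [V HV <-]] Hs.
move: HV => [N _ HN]. exists N => t Ht.
apply: le_lt_trans Hs; apply: ereal_sup_ubound; exists t => //; exact: HN.
Qed.
Lemma L1 (u : nat -> \bar RR) r :
  (forall N, exists t, (N <= t)%N /\ r%:E <= u t) -> r%:E <= limn_esup u.
Proof.
move=> H; rewrite /limn_esup limf_esupE.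
apply: le_ereal_inf_tmp => _ [V [N _ HN] <-].
have [t [Nt Ht]] := H N.
apply: le_ereal_sup_tmp; exists (u t) => //; exists t => //; exact: HN.
Qed.

Lemma between (l : \bar RR) (a : RR) : l < a%:E -> exists a', (a' < a)%R /\ l < a'%:E.
Proof.
case: l => [r| |] //=.
- rewrite lte_fin => h; exists ((r + a) / 2)%R; rewrite lte_fin; split; lra.
- move=> _; exists (a - 1)%R; split; [lra|exact: ltNyr].
Qed.

Lemma dens_sum (n : nat) (X Y Z : nat -> bool) (a b : RR) :
  (forall i, (n < i)%N -> Z i -> X i || Y i) ->
  upper_density X < a%:E -> upper_density Y < b%:E ->
  upper_density Z < (a + b)%:E.
Proof.
move=> H /between[a' [ha hX]] /between[b' [hb hY]].
have [N1 HN1] := @L2 _ _ hX. have [N2 HN2] := @L2 _ _ hY.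
set d := ((a + b - a' - b') / 2)%R.
have d0 : (0 < d)%R by rewrite /d; lra.
set M := Num.truncn (n%:R / d)%R.
apply: (@le_lt_trans _ _ (a' + b' + d)%R%:E); last by rewrite lte_fin /d; lra.
apply: (@L3 _ (maxn (maxn N1 N2) M.+1)) => t Ht.
have h1 := HN1 t ltac:(lia). have h2 := HN2 t ltac:(lia).
rewrite lte_fin in h1; rewrite lte_fin in h2; rewrite lee_fin.
have tpos : (0 < t%:R :> RR)%R by rewrite ltr0n; lia.
have hM : (n%:R / d < t%:R :> RR)%R.
  apply: (lt_le_trans (truncnS_gt _)); rewrite ler_nat; move: Ht; rewrite /M; set m := Num.truncn _; lia.
have hn : (n%:R / t%:R <= d :> RR)%R.
  rewrite ler_pdivrMr // mulrC -ler_pdivrMr //; exact: ltW.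
have hc := @count_le n X Y Z t H.
have : ((count_upto Z t)%:R <= (n + count_upto X t + count_upto Y t)%:R :> RR)%R.
  rewrite ler_nat; lia.
rewrite !natrD => hc'.
have : ((count_upto Z t)%:R / t%:R <= n%:R / t%:R + (count_upto X t)%:R / t%:R
   + (count_upto Y t)%:R / t%:R :> RR)%R.
  by rewrite -!mulrDl ler_pM2r // invr_gt0.
lra.
Qed.

Lemma dens_empty : upper_density (fun _ => false) <= 0%:E.
Proof.
apply: (@L3 _ 0) => t _; rewrite /count_upto big1 // mul0r //.
Qed.

Lemma dens_full : 1%:E <= upper_density (fun _ => true).
Proof.
apply: L1 => N; exists N.+1; split => //.
have : count_upto (fun _ => true) N.+1 = N.+1.
  elim: (N.+1) => [|k IH]; first by rewrite count_0.
  by rewrite count_S IH addn1.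
move=> ->; rewrite lee_fin divff // pnatr_eq0.
Qed.

Lemma cover (n : nat) (X Y : nat -> bool) :
  (forall i, (n < i)%N -> X i || Y i) ->
  (1/2 : RR)%:E <= upper_density X \/ (1/2 : RR)%:E <= upper_density Y.
Proof.
move=> H; case: (leP (1/2 : RR)%:E (upper_density X)) => hX; first by left.
case: (leP (1/2 : RR)%:E (upper_density Y)) => hY; first by right.
have := @dens_sum n X Y (fun _ => true) _ _ (fun i hi _ => H i hi) hX hY.
have := dens_full. move=> h1 h2.
have e : ((1/2 + 1/2 : RR)%R = 1)%R by lra. rewrite e in h2.
by have := lt_le_trans h2 h1; rewrite ltxx.
Qed.

Lemma mono (n : nat) (X Z : nat -> bool) :
  (forall i, (n < i)%N -> Z i -> X i) ->
  (1/2 : RR)%:E <= upper_density Z -> (1/2 : RR)%:E <= upper_density X.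
Proof.
move=> H hZ; case: (leP (1/2 : RR)%:E (upper_density X)) => hX //.
have [a' [ha hX']] := @between _ _ hX.
have he : upper_density (fun _ => false) < (1/2 - a')%:E.
  apply: le_lt_trans dens_empty _; rewrite lte_fin; lra.
have := @dens_sum n X (fun _ => false) Z _ _ (fun i hi hz => ltac:(by rewrite (H i hi hz))) hX' he.
have : (a' + (1/2 - a'))%R = (1/2)%R by lra.
move=> -> h; have := lt_le_trans h hZ; by rewrite ltxx.
Qed.
Local Close Scope ereal_scope.
Definition good col c (S : nat -> bool) : Prop :=
  (forall x, S x -> (0 < x)%N) /\ (forall u, S u -> infinite_degree col S c u).

Definition core col c : nat -> bool :=
  fun x => `[< exists S, good col c S /\ S x >].

Lemma nbhd_mono col c (S S' : nat -> bool) u w :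
  (forall x, S x -> S' x) -> nbhd col S c u w -> nbhd col S' c u w.
Proof.
rewrite /nbhd => H /and3P[h1 h2 h3]; by rewrite (H _ h1) h2 h3.
Qed.

Lemma sub_core col c S x : good col c S -> S x -> core col c x.
Proof. move=> hS hx; apply/asboolP; by exists S. Qed.

Lemma core_good col c : good col c (core col c).
Proof.
split.
- move=> x /asboolP[S [[hp _] hx]]; exact: hp.
- move=> u /asboolP[S [[hp hd] hu]] n.
  have [w [hw hn]] := hd u hu n; exists w; split => //.
  apply: nbhd_mono hn => x hx; exact: (@sub_core col c S x (conj hp hd) hx).
Qed.

Lemma findvertex col c (Y : nat -> bool) y0 :
  (forall y, Y y -> (0 < y)%N) -> Y y0 -> (forall y, Y y -> ~~ core col c y) ->
  exists y, Y y /\ exists n, forall w, (n < w)%N -> (Y w || core col c w) ->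
     w != y -> col y w != c.
Proof.
move=> Ypos Y0 Ydis; apply: NNPP => Hn.
have hg : good col c (fun w => Y w || core col c w).
  split.
  - move=> x /orP[/Ypos //|]; exact: (core_good col c).1.
  - move=> u /orP[hY|hK].
    + move=> n; apply: NNPP => hnot; apply: Hn; exists u; split => //.
      exists n => w hw hS hwu; apply/negP => /eqP hc; apply: hnot.
      exists w; split => //; rewrite /nbhd hS hwu /=; exact/eqP.
    + move=> n; have [w [hw hn]] := (core_good col c).2 u hK n.
      exists w; split => //; apply: nbhd_mono hn => x ->; exact: orbT.
have := Ydis y0 Y0; by rewrite (@sub_core col c _ y0 hg ltac:(by rewrite /= Y0)).
Qed.

Lemma neg_eq (b c : bool) : b != c -> b == ~~ c.
Proof. by case: b; case: c. Qed.

Lemma not_inf (P : nat -> bool) :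
  ~ (forall N, exists x, (N < x)%N /\ P x) -> exists M, forall x, (M < x)%N -> ~~ P x.
Proof.
move=> H; apply: NNPP => H2; apply: H => N; apply: NNPP => H3; apply: H2.
exists N => x hx; apply/negP => hP; apply: H3; by exists x.
Qed.

Lemma qfin col c : exists N, forall x, (N < x)%N -> core col c x || core col (~~ c) x.
Proof.
apply: NNPP => H.
have Hinf : forall N, exists x, (N < x)%N /\ ~~ (core col c x || core col (~~ c) x).
  move=> N; apply: NNPP => h; apply: H; exists N => x hx; apply: NNPP => h2; apply: h.
  exists x; split => //; exact/negP.
pose Q x := [&& (0 < x)%N, ~~ core col c x & ~~ core col (~~ c) x].
pose Qb x := Q x && `[< exists n, forall w, (n < w)%N -> (Q w || core col c w) ->
     w != x -> col x w != c >].
have [M HM] : exists M, forall x, (M < x)%N -> ~~ Qb x.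
  apply: not_inf => hinf.
  have hg : good col (~~ c) Qb.
    split.
    - by move=> x /andP[/and3P[]].
    - move=> q /andP[_ /asboolP[n hn]] m.
      have [x [hx hQ]] := hinf (maxn (maxn n m) q).
      exists x; split; first lia.
      rewrite /nbhd hQ /=; apply/andP; split; first by apply/negP => /eqP; lia.
      have := hn x ltac:(lia) ltac:(by case/andP: hQ => ->) ltac:(by apply/negP => /eqP; lia).
      exact: neg_eq.
  have [x [hx hQ]] := hinf 0.
  have := @sub_core col (~~ c) _ x hg hQ; case/andP: hQ => /and3P[_ _ /negP h] _; done.
have [x0 [hx0 hn0]] := Hinf M.
pose Y x := Q x && (M < x)%N.
have hY0 : Y x0.
  rewrite /Y /Q hx0; move: hn0; rewrite negb_or => /andP[-> ->]; rewrite andbT /=; lia.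
have [y [hy [n hn]]] := @findvertex col c Y x0
   ltac:(by move=> z /andP[/and3P[]]) hY0 ltac:(by move=> z /andP[/and3P[]]).
have : Qb y.
  rewrite /Qb; case/andP: hy => -> _; apply/asboolP; exists (maxn n M) => w hw hw2 hwy.
  apply: hn => //; first lia.
  case/orP: hw2 => [hQ|->]; last exact: orbT.
  by rewrite /Y hQ /=; apply/orP; left; lia.
by rewrite (negbTE (HM y ltac:(by case/andP: hy))).
Qed.
Local Open Scope ereal_scope.

Lemma main_case col c N0 :
  (forall x, (N0 < x)%N -> core col c x || core col (~~ c) x) ->
  (1/2 : RR)%:E <= upper_density (core col c) ->
  exists (A : nat -> bool) (v : nat) (c : bool),
    (forall x, A x -> (0 < x)%N) /\
    A v /\
    (forall u, A u -> infinite_degree col A c u) /\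
    (upper_density (nbhd col A c v) >= ((1 / 2 : Rdefinitions.R))%:E)%E.
Proof.
move=> HN hd.
set K := core col c; set K' := core col (~~ c).
have [gK1 gK2] := core_good col c. have [gK1' gK2'] := core_good col (~~ c).
case: (boolP `[< exists y, K y && ~~ K' y >]) => [/asboolP[y0 hy0]|hA].
  have [y [hy [n hn]]] := @findvertex col (~~ c) (fun x => K x && ~~ K' x) y0
    ltac:(by move=> z /andP[/gK1]) hy0 ltac:(by move=> z /andP[]).
  exists K, y, c; split => //; split; first by case/andP: hy.
  split => //.
  apply: (@mono (maxn n y) _ K _ hd) => i hi hKi.
  rewrite /nbhd hKi /=; apply/andP; split; first by apply/negP => /eqP; lia.
  have h1 : (n < i)%N by lia.
  have h2 : (i != y) by apply/negP => /eqP; lia.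
  have h3 : (K i && ~~ K' i) || K' i by rewrite hKi; case: (K' i).
  have := hn i h1 h3 h2.
  move=> hh; have := neg_eq _ _ hh; rewrite negbK; by [].
have KK' : forall y, K y -> K' y.
  move=> y hy; apply: contraT => hy'; case/negP: hA; apply/asboolP; exists y; by rewrite hy.
case: (boolP `[< exists y, K' y && ~~ K y >]) => [/asboolP[y0 hy0]|hB].
  have [y [hy [n hn]]] := @findvertex col c (fun x => K' x && ~~ K x) y0
    ltac:(by move=> z /andP[/gK1']) hy0 ltac:(by move=> z /andP[]).
  exists K', y, (~~ c); split => //; split; first by case/andP: hy.
  split => //.
  have hc := @cover (maxn (maxn n y) N0) (nbhd col K' (~~ c) y) (nbhd col K' (~~ c) y).
  suff hh : forall i, (maxn (maxn n y) N0 < i)%N -> nbhd col K' (~~ c) y i.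
    by case: (hc (fun i hi => ltac:(by rewrite (hh i hi)))).
  move=> i hi.
  have hK'i : K' i by case/orP: (HN i ltac:(lia)) => // /KK'.
  rewrite /nbhd hK'i /=; apply/andP; split; first by apply/negP => /eqP; lia.
  have h1 : (n < i)%N by lia.
  have h2 : (i != y) by apply/negP => /eqP; lia.
  have h3 : (K' i && ~~ K i) || K i by rewrite hK'i; case: (K i).
  exact: (neg_eq _ _ (hn i h1 h3 h2)).
have K'K : forall y, K' y -> K y.
  move=> y hy; apply: contraT => hy'; case/negP: hB; apply/asboolP; exists y; by rewrite hy.
set v := N0.+1.
have hKv : K v by case/orP: (HN v ltac:(lia)) => // /K'K.
have hc := @cover (maxn N0 v) (nbhd col K c v) (nbhd col K' (~~ c) v).
case: hc.
- move=> i hi; have hKi : K i by case/orP: (HN i ltac:(lia)) => // /K'K.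
  rewrite /nbhd hKi (KK' _ hKi) /=.
  have -> : (i != v) by apply/negP => /eqP; lia.
  by case: (col v i); case: (c).
- move=> h; exists K, v, c; split => //.
- move=> h; exists K', v, (~~ c); split => //; split => //; exact: KK'.
Qed.

Theorem mainTheorem14 (col : nat -> nat -> bool) :
  two_coloring col ->
  exists (A : nat -> bool) (v : nat) (c : bool),
    (forall x, A x -> (0 < x)%N) /\
    A v /\
    (forall u, A u -> infinite_degree col A c u) /\
    (upper_density (nbhd col A c v) >= ((1 / 2 : Rdefinitions.R))%:E)%E.
Proof.
move=> _.
have [N0 HN] := qfin col true.
case: (@cover N0 (core col true) (core col false) HN) => h.
- exact: (@main_case col true N0 HN h).
- apply: (@main_case col false N0 _ h) => x hx; rewrite orbC; exact: HN.
Qed.
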